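(* Let $n\geq 1$ and let $I$ be a nonempty subset of $[n]$. Then $PC^-_I=\bigcap_{i\in I}PC^-_{\{i\}}$ and $NC^-_I=\bigcap_{i\in I}NC^-_{\{i\}}$.
   Context: Boolean functions on $n$ variables are maps $f:\{0,1\}^n\to\{0,1\}$, variables indexed by $[n]=\{0,\dots,n-1\}$. For a nonempty $I\subseteq[n]$, $f$ is positively canalizing on $I$ if there is a function $\sigma:I\to\{0,1\}$ such that for all $x\in\{0,1\}^n$, if there exists $i\in I$ with $x_i\neq\sigma(i)$ then $f(x)=1$; negatively canalizing on $I$ is defined the same way with $f(x)=0$ in place of $f(x)=1$. $PC^-_I$ (resp. $NC^-_I$) is the set of nonconstant Boolean functions on $n$ variables that are positively (resp. negatively) canalizing on $I$. *)

(* Defs.v *)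
From mathcomp Require Import all_boot.
Set Implicit Arguments. Unset Strict Implicit. Unset Printing Implicit Defensive.

Definition boolfun (n : nat) := {ffun 'I_n -> bool} -> bool.

Definition nonconstant n (f : boolfun n) : Prop := exists x y, f x <> f y.

(* f is canalizing on I with output b: there is sigma : I -> {0,1}
   (represented as a function on 'I_n, only its values on I matter) such that
   whenever some i in I has x_i <> sigma i, f x = b. *)
Definition canalizing_on n (I : {set 'I_n}) (b : bool) (f : boolfun n) : Prop :=
  exists sigma : 'I_n -> bool,
    forall x : {ffun 'I_n -> bool},
      (exists2 i, i \in I & x i <> sigma i) -> f x = b.

Definition pos_canalizing_on n (I : {set 'I_n}) f := canalizing_on I true f.
Definition neg_canalizing_on n (I : {set 'I_n}) f := canalizing_on I false f.

Definition PCm n (I : {set 'I_n}) (f : boolfun n) : Prop :=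
  nonconstant f /\ pos_canalizing_on I f.
Definition NCm n (I : {set 'I_n}) (f : boolfun n) : Prop :=
  nonconstant f /\ neg_canalizing_on I f.

(* Main.v *)
Require Import Defs.
From mathcomp Require Import all_boot.

Lemma gen n (I : {set 'I_n}) (b : bool) (f : boolfun n) : I != set0 ->
  (nonconstant f /\ canalizing_on I b f) <->
  (forall i, i \in I -> nonconstant f /\ canalizing_on [set i] b f).
Proof.
move=> /set0Pn [i0 Hi0]; split.
  move=> [Hn [s Hs]] i Hi; split => //; exists s => x [j]; rewrite inE => /eqP -> Hx.
  by apply: Hs; exists i.
move=> H; have [Hn _] := H i0 Hi0; split => //.
have [y Hy] : exists y, f y <> b.
  case: Hn => x [z Hxz]; case: (boolP (f x == b)) => [/eqP Hx|/eqP Hx].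
    by exists z; rewrite -Hx => E; apply: Hxz.
  by exists x.
exists y => x [i Hi Hx]; have [_ [s Hs]] := H i Hi.
apply: (Hs); exists i; first by rewrite inE.
move=> E; apply: Hx; rewrite E.
case: (boolP (y i == s i)) => [/eqP //|Hne].
exfalso; apply: Hy; apply: Hs; exists i; first by rewrite inE.
by apply/eqP.
Qed.

Theorem mainTheorem5 (n : nat) (I : {set 'I_n}) :
  1 <= n -> I != set0 ->
  (forall f : boolfun n, PCm I f <-> (forall i, i \in I -> PCm [set i] f)) /\
  (forall f : boolfun n, NCm I f <-> (forall i, i \in I -> NCm [set i] f)).
Proof.
move=> _ HI; split => f; exact: gen.
Qed.
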